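(* Let $r \in \mathbb{Q}_{>0}$ be such that $S_r$ is atomic. (1) If $r < 1$, then for every $x \in S_r$ with $|\mathsf{Z}(x)| > 1$, $\mathsf{L}(x) = \{\min \mathsf{L}(x) + k(\mathsf{d}(r) - \mathsf{n}(r)) : k \in \mathbb{N}_0\}$. (2) If $r \in \mathbb{N}$, then $|\mathsf{Z}(x)| = |\mathsf{L}(x)| = 1$ for all $x \in S_r$. (3) If $r \in \mathbb{Q}_{>1} \setminus \mathbb{N}$, then for every $x \in S_r$ with $|\mathsf{Z}(x)| > 1$, $\mathsf{L}(x) = \{\min \mathsf{L}(x) + k(\mathsf{n}(r) - \mathsf{d}(r)) : 0 \le k \le \frac{\max \mathsf{L}(x) - \min \mathsf{L}(x)}{\mathsf{n}(r) - \mathsf{d}(r)}\}$. In particular, for every $x \in S_r$, $\mathsf{L}(x)$ is an arithmetic progression with difference $|\mathsf{n}(r) - \mathsf{d}(r)|$.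
   Context: For $q \in \mathbb{Q}_{>0}$, $\mathsf{n}(q)$ and $\mathsf{d}(q)$ denote the unique positive coprime integers with $q = \mathsf{n}(q)/\mathsf{d}(q)$. For $r \in \mathbb{Q}_{>0}$, $S_r$ is the additive submonoid of $(\mathbb{Q}_{\ge 0},+)$ generated by $\{r^n : n \in \mathbb{N}_0\}$; it is atomic exactly when $r=1$ or $\mathsf{n}(r)>1$. If $r \in \mathbb{N}$ then $S_r = \mathbb{N}_0$ with unique atom $1$; if $r \notin \mathbb{N}$ and $S_r$ is atomic, its atoms are the pairwise distinct elements $r^n$, $n \in \mathbb{N}_0$. A factorization of $x$ is a formal finite sum of atoms (with multiplicities) whose value is $x$; $\mathsf{Z}(x)$ is the set of factorizations of $x$, $|z|$ is the number of atoms in $z$ counted with multiplicity, and $\mathsf{L}(x) = \{|z| : z \in \mathsf{Z}(x)\}$. *)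

(* Defs.v *)
From HB Require Import structures.
From mathcomp Require Import all_boot all_order all_algebra.
Set Implicit Arguments. Unset Strict Implicit. Unset Printing Implicit Defensive.
Import Order.TTheory GRing.Theory Num.Theory.
Local Open Scope ring_scope.

Definition nq (q : rat) : nat := `|numq q|%N.
Definition dq (q : rat) : nat := `|denq q|%N.

Definition inSr (r x : rat) : Prop :=
  exists s : seq nat, x = \sum_(i <- s) r ^+ i.

Definition is_atom (r a : rat) : Prop :=
  inSr r a /\ a != 0 /\
  forall b c, inSr r b -> inSr r c -> a = b + c -> b = 0 \/ c = 0.

Definition atomic (r : rat) : Prop :=
  forall x, inSr r x -> x != 0 ->
    exists z : seq rat, (forall a, a \in z -> is_atom r a) /\ \sum_(a <- z) a = x.

(* a factorization of x: a formal finite sum of atoms (a multiset of atoms,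
   represented by a list; two lists denote the same factorization iff they
   are permutations of each other) whose value is x *)
Definition is_fact (r x : rat) (z : seq rat) : Prop :=
  (forall a, a \in z -> is_atom r a) /\ \sum_(a <- z) a = x.

Definition Z_gt1 (r x : rat) : Prop :=
  exists z1 z2, is_fact r x z1 /\ is_fact r x z2 /\ ~~ perm_eq z1 z2.

Definition Z_eq1 (r x : rat) : Prop :=
  (exists z, is_fact r x z) /\
  forall z1 z2, is_fact r x z1 -> is_fact r x z2 -> perm_eq z1 z2.

Definition Lset (r x : rat) (l : nat) : Prop :=
  exists z, is_fact r x z /\ size z = l.

Definition is_minL (r x : rat) (m : nat) : Prop :=
  Lset r x m /\ forall l, Lset r x l -> (m <= l)%N.
Definition is_maxL (r x : rat) (M : nat) : Prop :=
  Lset r x M /\ forall l, Lset r x l -> (l <= M)%N.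

Definition is_AP (L : nat -> Prop) (q : nat) : Prop :=
  exists a,
    (exists N, forall l, L l <-> exists k, (k <= N)%N /\ l = (a + k * q)%N) \/
    (forall l, L l <-> exists k, l = (a + k * q)%N).

(* Main.v *)
Require Import Defs.
From HB Require Import structures.
From mathcomp Require Import all_boot all_order all_algebra.
From mathcomp Require Import zify ring lra.
From Stdlib Require Import Classical.
Import Order.TTheory GRing.Theory Num.Theory.
Local Open Scope ring_scope.

Definition val (r : rat) (s : seq nat) : rat := \sum_(i <- s) r ^+ i.

Lemma sumr_nseq (F : nat -> rat) k j : \sum_(i <- nseq k j) F i = k%:R * F j.
Proof. elim: k => [|k IH]; first by rewrite big_nil mul0r.
by rewrite /= big_cons IH mulrSr mulrDl mul1r addrC. Qed.

Lemma sumn_nseq (F : nat -> nat) k j : (\sum_(i <- nseq k j) F i = k * F j)%N.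
Proof. elim: k => [|k IH]; first by rewrite big_nil.
by rewrite /= big_cons IH mulSn. Qed.

Lemma nseq_split (x : nat) k s : (k <= count_mem x s)%N -> exists t, perm_eq s (nseq k x ++ t).
Proof.
elim: k s => [|k IH] s hk; first by exists s.
have xs : x \in s by rewrite -has_pred1 has_count; lia.
have hp := perm_to_rem xs.
have hc : count_mem x s = (count_mem x (rem x s)).+1.
  by rewrite (permP hp) /= eqxx.
have [t ht] : exists t, perm_eq (rem x s) (nseq k x ++ t) by apply: IH; lia.
exists t; apply: (perm_trans hp); by rewrite /= perm_cons.
Qed.

Lemma count_nseq_cat (x : nat) k t : (k <= count_mem x (nseq k x ++ t))%N.
Proof. by rewrite count_cat count_nseq /= eqxx mul1n leq_addr. Qed.

Lemma perm_count_eq (s1 s2 : seq nat) : perm_eq s1 s2 -> forall x, count_mem x s1 = count_mem x s2.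
Proof. by move=> /permP h x; apply: h. Qed.

Lemma count_perm (s1 s2 : seq nat) : (forall x, count_mem x s1 = count_mem x s2) -> perm_eq s1 s2.
Proof. by move=> h; apply/allP => x _ /=; rewrite h. Qed.

Definition mu n (s : seq nat) := (\sum_(i <- s) n.+1 ^ i)%N.

Lemma reduceA n d (r : rat) (hd : (0 < d)%N) (hrd : r * d%:R = n%:R) s :
  exists s', (forall i, count_mem i.+1 s' < d)%N /\ val r s' = val r s /\
   exists t, (size s' + t*d = size s + t*n)%N /\
     (forall k, k <= t -> exists u, val r u = val r s /\ size u + k*d = size s + k*n)%N /\
     (perm_eq s' s \/ exists i, (n <= count_mem i s')%N).
Proof.
have [N hN] := ubnP (mu n s); elim: N s hN => // N IH s hN.
case: (classic (exists i, (d <= count_mem i.+1 s)%N)) => [[i hi]|hno]; last first.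
  exists s; split.
    by move=> i; rewrite ltnNge; apply/negP => h; apply: hno; exists i.
  split=> //; exists 0%N; split=> //; split; last by left.
  by move=> k; rewrite leqn0 => /eqP ->; exists s.
have [t0 ht0] := nseq_split _ _ _ hi.
set s1 := nseq n i ++ t0.
have hv : val r s1 = val r s.
  rewrite /val (perm_big _ ht0) !big_cat /= !sumr_nseq; congr (_ + _).
  by rewrite exprS mulrA [_ * r]mulrC hrd.
have hsz : (size s1 + d = size s + n)%N.
  by rewrite /s1 (perm_size ht0) !size_cat !size_nseq addnAC [RHS]addnAC [(n + d)%N]addnC.
have hmu : (mu n s1 < mu n s)%N.
  rewrite /mu (perm_big _ ht0) !big_cat /= !sumn_nseq ltn_add2r expnS.
  have h1 : (0 < n.+1 ^ i)%N by rewrite expn_gt0.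
  set X := (n.+1 ^ i)%N in h1 *.
  have : (n * X < n.+1 * X)%N by rewrite ltn_pmul2r.
  have : (n.+1 * X <= d * (n.+1 * X))%N by rewrite leq_pmull.
  move=> h2 h3; exact: leq_trans h3 h2.
have [s' [hc [hv' [t [hs' [hk hdj]]]]]] := IH s1 (leq_trans hmu (hN : (mu n s < N.+1)%N)).
exists s'; split=> //; split; first by rewrite hv'.
exists t.+1; split; first by nia.
split.
  case=> [|k] hkt; first by exists s.
  have [u [hu1 hu2]] := hk k hkt.
  exists u; split; first by rewrite hu1.
  nia.
right; case: hdj => [hp|//].
exists i; rewrite (perm_count_eq _ _ hp); exact: count_nseq_cat.
Qed.
Local Close Scope ring_scope.
Lemma coprime_cancel d u a b X Y : coprime d u -> a < d -> b < d ->
  a * u + d * X = b * u + d * Y -> a = b.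
Proof.
wlog hab : a b X Y / b <= a.
  move=> W hc ha hb he; case: (leqP b a) => h; first exact: W he.
  by apply/esym; apply: (W b a Y X) => //; exact: ltnW.
move=> hc ha hb he.
have e2 : (a - b) * u + d * X = d * Y.
  have : a * u = b * u + (a - b) * u by rewrite -mulnDl subnKC.
  lia.
have hdv : d %| (a - b) * u.
  have : d %| (a - b) * u + d * X by rewrite e2 dvdn_mulr.
  by rewrite dvdn_addl // dvdn_mulr.
rewrite Gauss_dvdl // in hdv.
have : a - b = 0.
  case: (posnP (a - b)) => // hp; have := dvdn_leq hp hdv; lia.
lia.
Qed.

Lemma uniqA_nat n d (c1 c2 : nat -> nat) K : 0 < d -> coprime d n ->
  (forall j, 0 < j -> c1 j < d) -> (forall j, 0 < j -> c2 j < d) ->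
  \sum_(j < K.+1) c1 j * (n ^ j * d ^ (K - j)) = \sum_(j < K.+1) c2 j * (n ^ j * d ^ (K - j)) ->
  forall j, j <= K -> c1 j = c2 j.
Proof.
move=> hd hc h1 h2; elim: K => [|K IH].
  by rewrite !big_ord1 /= subnn !expn0 !muln1 => h0 j; rewrite leqn0 => /eqP ->.
have dec (c : nat -> nat) : \sum_(j < K.+2) c j * (n ^ j * d ^ (K.+1 - j)) =
   c K.+1 * n ^ K.+1 + d * \sum_(j < K.+1) c j * (n ^ j * d ^ (K - j)).
  rewrite big_ord_recr /= subnn expn0 muln1 addnC; congr (_ + _).
  rewrite big_distrr /=; apply: eq_bigr => j _.
  rewrite subSn; last by rewrite -ltnS.
  rewrite expnS; lia.
rewrite !dec => he.
have hK : c1 K.+1 = c2 K.+1.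
  exact: (coprime_cancel _ _ _ _ _ _ (coprimeXr _ hc) (h1 K.+1 (ltn0Sn K)) (h2 K.+1 (ltn0Sn K)) he).
rewrite hK in he; move/eqP: he; rewrite eqn_add2l eqn_mul2l.
rewrite (negbTE (lt0n_neq0 hd)) /= => /eqP /IH hI j.
rewrite leq_eqVlt => /orP [/eqP -> //| ]; rewrite ltnS; exact: hI.
Qed.

Lemma uniqB_nat n d K : 0 < n -> coprime n d -> forall (c1 c2 : nat -> nat),
  (forall j, c1 j < n) -> (forall j, c2 j < n) ->
  \sum_(j < K.+1) c1 j * (n ^ j * d ^ (K - j)) = \sum_(j < K.+1) c2 j * (n ^ j * d ^ (K - j)) ->
  forall j, j <= K -> c1 j = c2 j.
Proof.
move=> hn hc; elim: K => [|K IH] c1 c2 h1 h2.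
  by rewrite !big_ord1 /= subnn !expn0 !muln1 => h0 j; rewrite leqn0 => /eqP ->.
have dec (c : nat -> nat) : \sum_(j < K.+2) c j * (n ^ j * d ^ (K.+1 - j)) =
   c 0 * d ^ K.+1 + n * \sum_(j < K.+1) c j.+1 * (n ^ j * d ^ (K - j)).
  rewrite big_ord_recl /= expn0 mul1n subn0; congr (_ + _).
  rewrite big_distrr /=; apply: eq_bigr => j _.
  rewrite /bump /= add1n subSS expnS; lia.
rewrite !dec => he.
have h0 : c1 0 = c2 0.
  exact: (coprime_cancel _ _ _ _ _ _ (coprimeXr _ hc) (h1 _) (h2 _) he).
rewrite h0 in he; move/eqP: he; rewrite eqn_add2l eqn_mul2l.
rewrite (negbTE (lt0n_neq0 hn)) /= => /eqP he.
have hI := IH (fun j => c1 j.+1) (fun j => c2 j.+1) (fun j => h1 _) (fun j => h2 _) he.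
case=> [|j] hj //; apply: hI; by [].
Qed.
Local Open Scope ring_scope.
Lemma sum_count (F : nat -> nat) K (s : seq nat) : all (fun i => i <= K)%N s ->
  (\sum_(i <- s) F i = \sum_(j < K.+1) count_mem (nat_of_ord j) s * F j)%N.
Proof.
elim: s => [|a s IH] /=.
  by move=> _; rewrite big_nil big1.
move=> /andP [ha hs]; rewrite big_cons IH //.
rewrite (eq_bigr (fun j : 'I_K.+1 => (a == nat_of_ord j) * F j + count (pred1 (nat_of_ord j)) s * F j)%N);
  last by move=> j _; rewrite mulnDl.
rewrite big_split /=; congr (_ + _)%N.
rewrite (bigD1 (Ordinal (ha : (a < K.+1)%N))) //= eqxx mul1n big1 ?addn0 //.
move=> j hj; case: eqP => //= haj; exfalso; move: hj; rewrite -(inj_eq val_inj) /= haj eqxx.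
by [].
Qed.

Lemma val_scale n d (r : rat) (hrd : r * d%:R = n%:R) K (s : seq nat) :
  all (fun i => i <= K)%N s ->
  val r s * (d ^ K)%:R = (\sum_(i <- s) n ^ i * d ^ (K - i))%N%:R.
Proof.
elim: s => [|a s IH] /=; first by rewrite /val !big_nil mul0r.
move=> /andP [ha hs]; rewrite /val !big_cons mulrDl -/(val r s) IH // natrD; congr (_ + _).
rewrite -{1}(subnKC ha) expnD natrM mulrA natrX -exprMn hrd -!natrX -natrM.
by [].
Qed.

Lemma vals_eq_sums n d (r : rat) (hrd : r * d%:R = n%:R) (hd : (0 < d)%N) (s1 s2 : seq nat) :
  val r s1 = val r s2 ->
  exists K, (forall j, (K < j)%N -> count_mem j s1 = 0 /\ count_mem j s2 = 0) /\
  (\sum_(j < K.+1) count_mem (nat_of_ord j) s1 * (n ^ j * d ^ (K - j)) =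
   \sum_(j < K.+1) count_mem (nat_of_ord j) s2 * (n ^ j * d ^ (K - j)))%N.
Proof.
move=> hv; set K := (\max_(i <- s1 ++ s2) i)%N.
have hK x : x \in s1 ++ s2 -> (x <= K)%N by move=> hx; rewrite /K; exact: (@leq_bigmax_seq _ _ xpredT (fun i => i) x hx isT).
have a1 : all (fun i => i <= K)%N s1 by apply/allP => x hx; apply: hK; rewrite mem_cat hx.
have a2 : all (fun i => i <= K)%N s2 by apply/allP => x hx; apply: hK; rewrite mem_cat hx orbT.
exists K; split.
  move=> j hj; split; apply/count_memPn; apply/negP => hx.
    by have := hK j; rewrite mem_cat hx => /(_ isT); rewrite leqNgt hj.
  by have := hK j; rewrite mem_cat hx orbT => /(_ isT); rewrite leqNgt hj.
have := val_scale n d r hrd K s1 a1; rewrite hv (val_scale n d r hrd K s2 a2) => /eqP.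
rewrite eqr_nat => /eqP.
by rewrite (sum_count (fun i => n ^ i * d ^ (K - i))%N K s1 a1) (sum_count (fun i => n ^ i * d ^ (K - i))%N K s2 a2).
Qed.

Lemma uniqA n d (r : rat) (hrd : r * d%:R = n%:R) (hd : (0 < d)%N) (hc : coprime d n)
  (s1 s2 : seq nat) :
  (forall i, count_mem i.+1 s1 < d)%N -> (forall i, count_mem i.+1 s2 < d)%N ->
  val r s1 = val r s2 -> perm_eq s1 s2.
Proof.
move=> h1 h2 hv; have [K [hz he]] := vals_eq_sums n d r hrd hd s1 s2 hv.
apply: count_perm => j; case: (leqP j K) => hj; last by rewrite !(proj1 (hz j hj)) (proj2 (hz j hj)).
apply: (uniqA_nat n d (fun j => count_mem j s1) (fun j => count_mem j s2) K hd hc _ _ he) => //.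
  by case=> // i _; apply: h1.
by case=> // i _; apply: h2.
Qed.

Lemma uniqB n d (r : rat) (hrd : r * d%:R = n%:R) (hd : (0 < d)%N) (hn : (0 < n)%N)
  (hc : coprime n d) (s1 s2 : seq nat) :
  (forall i, count_mem i s1 < n)%N -> (forall i, count_mem i s2 < n)%N ->
  val r s1 = val r s2 -> perm_eq s1 s2.
Proof.
move=> h1 h2 hv; have [K [hz he]] := vals_eq_sums n d r hrd hd s1 s2 hv.
apply: count_perm => j; case: (leqP j K) => hj; last by rewrite !(proj1 (hz j hj)) (proj2 (hz j hj)).
exact: (uniqB_nat n d K hn hc (fun j => count_mem j s1) (fun j => count_mem j s2) h1 h2 he).
Qed.

Lemma step_val n d (r : rat) (hrd : r * d%:R = n%:R) i t :
  val r (nseq d i.+1 ++ t) = val r (nseq n i ++ t).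
Proof.
rewrite /val !big_cat /= !sumr_nseq; congr (_ + _).
by rewrite exprS mulrA [_ * r]mulrC hrd.
Qed.

Lemma reduceB n d (r : rat) (hdn : (d < n)%N) (hrd : r * d%:R = n%:R) s :
  exists s', (forall i, count_mem i s' < n)%N /\ val r s' = val r s /\
   exists t, (size s' + t*n = size s + t*d)%N /\
     (perm_eq s' s \/ exists i, (d <= count_mem i s')%N).
Proof.
have [N hN] := ubnP (size s); elim: N s hN => // N IH s hN.
case: (classic (exists i, (n <= count_mem i s)%N)) => [[i hi]|hno]; last first.
  exists s; split.
    by move=> i; rewrite ltnNge; apply/negP => h; apply: hno; exists i.
  split=> //; exists 0%N; split=> //; by left.
have [t0 ht0] := nseq_split _ _ _ hi.
set s1 := nseq d i.+1 ++ t0.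
have hv : val r s1 = val r s by rewrite /s1 (step_val n d r hrd) /val (perm_big _ ht0).
have hsz : (size s1 + n = size s + d)%N.
  by rewrite /s1 (perm_size ht0) !size_cat !size_nseq addnAC [RHS]addnAC [(d + n)%N]addnC.
have hlt : (size s1 < N)%N.
  have : (size s < N.+1)%N := hN.
  move: hsz hdn; move: (size s1) (size s) => a b; lia.
have [s' [hc [hv' [t [hs' hdj]]]]] := IH s1 hlt.
exists s'; split=> //; split; first by rewrite hv'.
exists t.+1; split; first by nia.
right; case: hdj => [hp|//].
exists i.+1; rewrite (perm_count_eq _ _ hp); exact: count_nseq_cat.
Qed.

Lemma upchain n d (r : rat) (hnd : (n <= d)%N) (hrd : r * d%:R = n%:R) s i :
  (n <= count_mem i s)%N -> forall k, exists u, val r u = val r s /\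
    (size u + k*n = size s + k*d)%N /\ exists j, (n <= count_mem j u)%N.
Proof.
move=> hi k; elim: k => [|k [u [hu1 [hu2 [j hj]]]]]; first by exists s; split=> //; split=> //; exists i.
have [t0 ht0] := nseq_split _ _ _ hj.
exists (nseq d j.+1 ++ t0); split.
  by rewrite (step_val n d r hrd) /val -(perm_big _ ht0).
split.
  have : (size u = n + size t0)%N by rewrite (perm_size ht0) size_cat size_nseq.
  rewrite size_cat size_nseq.
  move: hu2; move: (size u) (size s) (size t0) => a b c; nia.
exists j.+1; exact: (leq_trans hnd (count_nseq_cat _ _ _)).
Qed.

Lemma part1_core n d (r : rat) (hnd : (n < d)%N) (hd : (0 < d)%N) (hc : coprime d n)
  (hrd : r * d%:R = n%:R) x s1 s2 :
  val r s1 = x -> val r s2 = x -> ~~ perm_eq s1 s2 ->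
  exists m, (exists s, val r s = x /\ size s = m) /\ (forall s, val r s = x -> (m <= size s)%N) /\
   forall l, (exists s, val r s = x /\ size s = l) <-> exists k, l = (m + k * (d - n))%N.
Proof.
move=> h1 h2 hnp.
have [c1 [hc1 [hv1 [t1 [hsz1 [_ hd1]]]]]] := reduceA n d r hd hrd s1.
have [c2 [hc2 [hv2 [t2 [hsz2 [_ hd2]]]]]] := reduceA n d r hd hrd s2.
have hp : perm_eq c1 c2 by apply: (uniqA n d r hrd hd hc) => //; rewrite hv1 hv2 h1 h2.
have [i hi] : exists i, (n <= count_mem i c1)%N.
  case: hd1 => [p1|//]; case: hd2 => [p2|[i hi]]; last first.
    by exists i; rewrite (perm_count_eq _ _ hp).
  exfalso; move/negP: hnp; apply.
  by apply: perm_trans _ (perm_trans hp p2); rewrite perm_sym.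
have hall s : val r s = x -> exists t, size s = (size c1 + t * (d - n))%N.
  move=> hs; have [c [hc' [hv [t [hsz _]]]]] := reduceA n d r hd hrd s.
  have hpc : perm_eq c c1 by apply: (uniqA n d r hrd hd hc) => //; rewrite hv hv1 hs h1.
  exists t; rewrite -(perm_size hpc) mulnBr.
  have : (t * n <= t * d)%N by rewrite leq_mul2l ltnW ?orbT.
  move: hsz; move: (size c) (size s) (t*n)%N (t*d)%N => a b e f; lia.
exists (size c1); split; first by exists c1; rewrite hv1 h1.
split.
  by move=> s hs; have [t ->] := hall s hs; rewrite leq_addr.
move=> l; split.
  by move=> [s [hs <-]]; have [t ->] := hall s hs; exists t.
move=> [k ->].
have [u [hu1 [hu2 _]]] := upchain n d r (ltnW hnd) hrd c1 i hi k.
exists u; split; first by rewrite hu1 hv1 h1.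
rewrite mulnBr.
have : (k * n <= k * d)%N by rewrite leq_mul2l ltnW ?orbT.
move: hu2; move: (size u) (size c1) (k*n)%N (k*d)%N => a b e f; lia.
Qed.

Lemma part3_core n d (r : rat) (hdn : (d < n)%N) (hd : (0 < d)%N) (hc : coprime n d)
  (hrd : r * d%:R = n%:R) x s0 :
  val r s0 = x ->
  exists m T, (exists s, val r s = x /\ size s = m) /\ (forall s, val r s = x -> (m <= size s)%N) /\
   (exists s, val r s = x /\ size s = (m + T * (n - d))%N) /\
   (forall s, val r s = x -> (size s <= m + T * (n - d))%N) /\
   forall l, (exists s, val r s = x /\ size s = l) <-> exists k, (k <= T)%N /\ l = (m + k * (n - d))%N.
Proof.
move=> h0.
have hn : (0 < n)%N by apply: leq_ltn_trans hdn.
have hc' : coprime d n by rewrite coprime_sym.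
have [sB [hcB [hvB [t0 [hszB _]]]]] := reduceB n d r hdn hrd s0.
have [sA [hcA [hvA [T [hszA [hk _]]]]]] := reduceA n d r hd hrd sB.
have hle a : (a * d <= a * n)%N by rewrite leq_mul2l ltnW ?orbT.
have hM : size sA = (size sB + T * (n - d))%N.
  rewrite mulnBr; have := hle T.
  move: hszA; move: (size sA) (size sB) (T*n)%N (T*d)%N => a b e f; lia.
have hall s : val r s = x -> exists t, (t <= T)%N /\ size s = (size sB + t * (n - d))%N.
  move=> hs.
  have [c [hc1 [hv [t [hsz _]]]]] := reduceB n d r hdn hrd s.
  have hpc : perm_eq c sB by apply: (uniqB n d r hrd hd hn hc) => //; rewrite hv hvB hs h0.
  have [c' [hc1' [hv' [t' [hsz' _]]]]] := reduceA n d r hd hrd s.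
  have hpc' : perm_eq c' sA by apply: (uniqA n d r hrd hd hc') => //; rewrite hv' hvA hvB hs h0.
  rewrite (perm_size hpc) in hsz; rewrite (perm_size hpc') hM in hsz'.
  have e1 : size s = (size sB + t * (n - d))%N.
    rewrite mulnBr; have := hle t.
    move: hsz; move: (size s) (size sB) (t*n)%N (t*d)%N => a b e f; lia.
  exists t; split=> //.
  rewrite e1 -addnA mulnBr mulnBr in hsz'.
  have hnd0 : (0 < n - d)%N by rewrite subn_gt0.
  have : (T * (n - d) = t * (n - d) + t' * (n - d))%N.
    rewrite !mulnBr.
    have := hle t; have := hle t'; have := hle T.
    move: hsz'; move: (size sB) (t*n)%N (t*d)%N (t'*n)%N (t'*d)%N (T*n)%N (T*d)%N => a b e f g h i; lia.
  rewrite -mulnDl => /eqP; rewrite eqn_mul2r (negbTE (lt0n_neq0 hnd0)) /= => /eqP ->.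
  by rewrite leq_addr.
exists (size sB), T; split; first by exists sB; rewrite hvB h0.
split; first by move=> s hs; have [t [_ ->]] := hall s hs; rewrite leq_addr.
split; first by exists sA; rewrite hvA hvB h0.
split.
  move=> s hs; have [t [ht ->]] := hall s hs; by rewrite leq_add2l leq_mul2r ht orbT.
move=> l; split.
  by move=> [s [hs <-]]; have [t [ht ->]] := hall s hs; exists t.
move=> [k [hkT ->]].
have [u [hu1 hu2]] := hk k hkT.
exists u; split; first by rewrite hu1 hvB h0.
rewrite mulnBr; have := hle k.
move: hu2; move: (size u) (size sB) (k*n)%N (k*d)%N => a b e f; lia.
Qed.

Lemma val_ge0 (r : rat) (hr : 0 < r) s : 0 <= val r s.
Proof. by apply: sumr_ge0 => i _; rewrite exprn_ge0 // ltW. Qed.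

Lemma val_gt0 (r : rat) (hr : 0 < r) s : s != [::] -> 0 < val r s.
Proof.
case: s => [//|i t] _; rewrite /val big_cons -/(val r t).
have := exprn_gt0 i hr; have := val_ge0 r hr t; lra.
Qed.

Lemma val1 (r : rat) i : val r [:: i] = r ^+ i.
Proof. by rewrite /val big_seq1. Qed.

Lemma val_cat (r : rat) s t : val r (s ++ t) = val r s + val r t.
Proof. by rewrite /val big_cat. Qed.

Lemma atom_pow (r : rat) (hr : 0 < r) a : is_atom r a -> exists i, a = r ^+ i.
Proof.
move=> [[s ->] [hne hdec]].
case: s hne hdec => [|i t]; first by rewrite big_nil eqxx.
move=> hne hdec; exists i.
case: t hne hdec => [|j t] hne hdec; first by rewrite big_seq1.
exfalso.
have := hdec (r ^+ i) (val r (j :: t)) (ex_intro _ [:: i] (esym (val1 r i)))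
   (ex_intro _ (j :: t) erefl).
rewrite big_cons => /(_ erefl) [h|h].
  by move: (exprn_gt0 i hr); rewrite h ltxx.
by move: (val_gt0 r hr (j :: t) isT); rewrite h ltxx.
Qed.

Lemma single n d (r : rat) (hn2 : (1 < n)%N) (hd2 : (1 < d)%N) (hc : coprime d n)
  (hrd : r * d%:R = n%:R) s i : val r s = r ^+ i -> perm_eq s [:: i].
Proof.
move=> hs.
have hd : (0 < d)%N by apply: ltnW.
have [c [hcc [hv [t [_ [_ hdj]]]]]] := reduceA n d r hd hrd s.
have hcan : forall j, (count_mem j.+1 [:: i] < d)%N.
  move=> j /=; rewrite addn0; case: (i == j.+1) => //=; exact: ltnW.
have hp : perm_eq c [:: i] by apply: (uniqA n d r hrd hd hc) => //; rewrite hv hs val1.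
case: hdj => [hp'|[j hj]].
  by apply: perm_trans hp; rewrite perm_sym.
exfalso; move: hj; rewrite (perm_count_eq _ _ hp) /= addn0.
by case: (i == j) => /=; rewrite leqNgt ?hn2 // (ltn_trans _ hn2).
Qed.

Lemma pow_atom (r : rat) (hr : 0 < r)
  (hsingle : forall s i, val r s = r ^+ i -> perm_eq s [:: i]) i : is_atom r (r ^+ i).
Proof.
split; first by exists [:: i]; rewrite big_seq1.
split; first by rewrite gt_eqF // exprn_gt0.
move=> b c [s1 ->] [s2 ->] he.
have hv : val r (s1 ++ s2) = r ^+ i by rewrite val_cat.
clear he; move: hv => /hsingle /perm_size; rewrite size_cat /=.
case: s1 => [|? s1]; first by left; rewrite big_nil.
case: s2 => [|? s2]; first by right; rewrite big_nil.
by rewrite /= addnS.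
Qed.

Lemma map_pow (r : rat) (z : seq rat) : (forall a, a \in z -> exists i, a = r ^+ i) ->
  exists s, z = map (fun i => r ^+ i) s.
Proof.
elim: z => [|a z IH] h; first by exists [::].
have [i ->] := h a (mem_head _ _).
have [s ->] : exists s, z = map (fun i => r ^+ i) s.
  by apply: IH => b hb; apply: h; rewrite inE hb orbT.
by exists (i :: s).
Qed.


Lemma fact_iff (r : rat) (hA : forall a, is_atom r a <-> exists i, a = r ^+ i) x z :
  is_fact r x z <-> exists s, z = map (fun i => r ^+ i) s /\ val r s = x.
Proof.
split.
  move=> [ha hx]; have [s hs] := map_pow r z (fun a h => proj1 (hA a) (ha a h)).
  by exists s; split=> //; rewrite -hx hs big_map.
move=> [s [-> hs]]; split.
  by move=> a /mapP [i _ ->]; apply/hA; exists i.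
by rewrite big_map.
Qed.

Lemma Lset_iff (r : rat) (hA : forall a, is_atom r a <-> exists i, a = r ^+ i) x l :
  Lset r x l <-> exists s, val r s = x /\ size s = l.
Proof.
split.
  move=> [z [/(fact_iff r hA) [s [-> hs]] <-]]; exists s; by rewrite size_map.
move=> [s [hs <-]]; exists (map (fun i => r ^+ i) s); rewrite size_map; split=> //.
by apply/(fact_iff r hA); exists s.
Qed.

Lemma Zgt1_lists (r : rat) (hA : forall a, is_atom r a <-> exists i, a = r ^+ i) x :
  Z_gt1 r x -> exists s1 s2, val r s1 = x /\ val r s2 = x /\ ~~ perm_eq s1 s2.
Proof.
move=> [z1 [z2 [/(fact_iff r hA) [s1 [e1 h1]] [/(fact_iff r hA) [s2 [e2 h2]] hn]]]].
exists s1, s2; split=> //; split=> //; apply/negP => hp; move/negP: hn; apply.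
by rewrite e1 e2; apply: perm_map.
Qed.

Lemma int_sum (k : nat) (s : seq nat) :
  \sum_(i <- s) (k%:R : rat) ^+ i = (\sum_(i <- s) k ^ i)%N%:R.
Proof. by rewrite natr_sum; apply: eq_bigr => i _; rewrite natrX. Qed.

Lemma inSr_one (r : rat) : inSr r 1.
Proof. by exists [:: 0%N]; rewrite big_seq1 expr0. Qed.

Lemma inSr_nat (r : rat) (A : nat) : inSr r A%:R.
Proof. by exists (nseq A 0%N); rewrite sumr_nseq expr0 mulr1. Qed.

Lemma int_atom (k : nat) a : is_atom (k%:R) a <-> a = 1.
Proof.
split.
  move=> [[s ->] [hne hdec]]; rewrite int_sum in hne hdec *.
  move: hne hdec; set A := (\sum_(i <- s) k ^ i)%N => hne hdec.
  have hA : (0 < A)%N by rewrite lt0n -(eqr_nat rat) .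
  case: (leqP A 1) => h1; first by have -> : A = 1%N by apply/eqP; rewrite eqn_leq h1 hA.
  exfalso.
  have := hdec 1 (A.-1)%:R (inSr_one _) (inSr_nat _ _).
  have e : (A%:R : rat) = 1 + A.-1%:R by rewrite -{1}(prednK hA) -natr1 addrC.
  move=> /(_ e) [/eqP|/eqP].
    by rewrite oner_eq0.
  rewrite pnatr_eq0 => /eqP h; lia.
move=> ->; split; first exact: inSr_one.
split; first by rewrite oner_eq0.
move=> b c [s1 ->] [s2 ->]; rewrite !int_sum -natrD => /eqP; rewrite (_ : (1 : rat) = 1%N%:R) // eqr_nat.
move=> /eqP h; case: (posnP (\sum_(i <- s1) k ^ i)%N) => h1.
  by left; rewrite h1.
by right; have -> : (\sum_(i <- s2) k ^ i)%N = 0%N by lia.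
Qed.

Lemma sumr_nseq1 (N : nat) : \sum_(a <- nseq N (1 : rat)) a = N%:R.
Proof. elim: N => [|N IH]; first by rewrite big_nil.
by rewrite /= big_cons IH -natr1 addrC. Qed.

Lemma part2 (k : nat) x : inSr (k%:R) x ->
  Z_eq1 (k%:R) x /\ exists l0, forall l, Lset (k%:R) x l <-> l = l0.
Proof.
move=> [s ->]; rewrite int_sum; set N := (\sum_(i <- s) k ^ i)%N.
have hones z y : is_fact (k%:R) y z -> z = nseq (size z) 1 /\ y = (size z)%:R.
  move=> [ha hy].
  have hz : z = nseq (size z) 1.
    apply/all_pred1P; apply/allP => a /ha /int_atom -> /=; exact: eqxx.
  split=> //; by rewrite -hy {1}hz sumr_nseq1.
have hf : is_fact (k%:R) N%:R (nseq N 1).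
  split; last by rewrite sumr_nseq1.
  move=> a; rewrite mem_nseq => /andP [_ /eqP ->]; exact/int_atom.
have hsz z : is_fact (k%:R) N%:R z -> size z = N.
  by move=> /hones [_ /eqP]; rewrite eqr_nat => /eqP.
split.
  split; first by exists (nseq N 1).
  move=> z1 z2 h1 h2.
  have [e1 _] := hones _ _ h1; have [e2 _] := hones _ _ h2.
  by rewrite e1 e2 (hsz _ h1) (hsz _ h2).
exists N => l; split.
  by move=> [z [hz <-]]; exact: hsz.
by move=> ->; exists (nseq N 1); rewrite size_nseq.
Qed.

Lemma exists_fact (r : rat) (hat : atomic r) x : inSr r x -> exists z, is_fact r x z.
Proof.
move=> hx; case: (eqVneq x 0) => [->|hne].
  by exists [::]; split=> //; rewrite big_nil.
by have [z hz] := hat x hx hne; exists z.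
Qed.

Lemma singleton_L (r : rat) x : ~ Z_gt1 r x -> (exists z, is_fact r x z) ->
  exists l0, forall l, Lset r x l <-> l = l0.
Proof.
move=> hn [z0 hz0]; exists (size z0) => l; split; last by move=> ->; exists z0.
move=> [z [hz <-]]; case: (boolP (perm_eq z0 z)) => h; first by rewrite (perm_size h).
by exfalso; apply: hn; exists z0, z.
Qed.

Lemma nd_facts (r : rat) : 0 < r ->
  [/\ (0 < nq r)%N, (0 < dq r)%N, coprime (nq r) (dq r) & r * (dq r)%:R = (nq r)%:R].
Proof.
move=> hr; rewrite /nq /dq.
have hn : 0 < numq r by rewrite numq_gt0.
have hd : 0 < denq r by [].
split.
- by rewrite absz_gt0 gt_eqF.
- by rewrite absz_gt0 gt_eqF.
- exact: coprime_num_den.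
- rewrite !natr_absz !gtr0_norm //.
  rewrite -{1}(divq_num_den r) mulfVK //. by rewrite intr_eq0 gt_eqF.
Qed.

Lemma atoms_char (r : rat) (hr : 0 < r) (hn2 : (1 < nq r)%N) (hd2 : (1 < dq r)%N) :
  forall a, is_atom r a <-> exists i, a = r ^+ i.
Proof.
have [hn hd hc hrd] := nd_facts r hr.
move=> a; split; first exact: atom_pow.
move=> [i ->]; apply: pow_atom => // s j.
by apply: (single (nq r) (dq r) r hn2 hd2 _ hrd); rewrite coprime_sym.
Qed.

Lemma lt1_facts (r : rat) (hr : 0 < r) (hat : atomic r) (hr1 : r < 1) :
  (1 < nq r)%N /\ (nq r < dq r)%N.
Proof.
have [hn hd hc hrd] := nd_facts r hr.
have hnd : (nq r < dq r)%N.
  by rewrite -(ltr_nat rat) -hrd -{2}(mul1r (dq r)%:R) ltr_pM2r ?ltr0n.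
split=> //.
case: (leqP (nq r) 1) => // h1; exfalso.
have en : nq r = 1%N by apply/eqP; rewrite eqn_leq h1 hn.
have hd2 : (1 < dq r)%N by rewrite -en.
have noat i : ~ is_atom r (r ^+ i).
  move=> [_ [_ hdec]].
  have e : r ^+ i = r ^+ i.+1 + (dq r).-1%:R * r ^+ i.+1.
    rewrite -{1}(mul1r (r ^+ i.+1)) -mulrDl addrC natr1 prednK; last exact: ltnW.
    by rewrite exprSr mulrC -mulrA hrd en mulr1.
  have := hdec (r ^+ i.+1) ((dq r).-1%:R * r ^+ i.+1).
  move=> /(_ (ex_intro _ [:: i.+1] (esym (val1 r i.+1)))).
  move=> /(_ (ex_intro _ (nseq (dq r).-1 i.+1) (esym (sumr_nseq _ _ _)))) /(_ e).
  move=> [/eqP|/eqP]; first by rewrite expf_eq0 (gt_eqF hr) andbF.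
  rewrite mulf_eq0 expf_eq0 (gt_eqF hr) andbF orbF pnatr_eq0 => /eqP h; lia.
have [z [hz hs]] := hat 1 (inSr_one r) (oner_neq0 _).
case: z hz hs => [|a z] hz hs; first by move: hs; rewrite big_nil => /eqP; rewrite eq_sym oner_eq0.
have [i hi] := atom_pow r hr a (hz a (mem_head _ _)).
by apply: (noat i); rewrite -hi; apply: hz; exact: mem_head.
Qed.

Lemma ap_single (L : nat -> Prop) l0 q : (forall l, L l <-> l = l0) -> is_AP L q.
Proof.
move=> h; exists l0; left; exists 0%N => l; rewrite h; split.
  by move=> ->; exists 0%N; rewrite mul0n addn0.
by move=> [k [hk ->]]; move: hk; rewrite leqn0 => /eqP ->; rewrite mul0n addn0.
Qed.

Lemma gt1_core (r : rat) (hr : 0 < r) (hr1 : 1 < r) (hnk : ~ (exists k : nat, r = k%:R)) x :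
  inSr r x -> (dq r < nq r)%N /\
  exists m T, is_minL r x m /\ is_maxL r x (m + T * (nq r - dq r))%N /\
    forall l, Lset r x l <-> exists k, (k <= T)%N /\ l = (m + k * (nq r - dq r))%N.
Proof.
move=> [s0 hx].
have [hn hd hc hrd] := nd_facts r hr.
have hdn : (dq r < nq r)%N.
  by rewrite -(ltr_nat rat) -hrd -{1}(mul1r (dq r)%:R) ltr_pM2r ?ltr0n.
have hd2 : (1 < dq r)%N.
  case: (leqP (dq r) 1) => // h1; exfalso; apply: hnk; exists (nq r).
  have e : dq r = 1%N by apply/eqP; rewrite eqn_leq h1 hd.
  by rewrite -hrd e mulr1.
have hn2 : (1 < nq r)%N := ltn_trans hd2 hdn.
have hA := atoms_char r hr hn2 hd2.
have h0 : val r s0 = x by rewrite hx.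
have [m [T [hm1 [hm2 [hM1 [hM2 hL]]]]]] := part3_core (nq r) (dq r) r hdn hd hc hrd x s0 h0.
split=> //; exists m, T; split.
  split; first by apply/(Lset_iff r hA).
  by move=> l /(Lset_iff r hA) [s [hs <-]]; apply: hm2.
split.
  split; first by apply/(Lset_iff r hA).
  by move=> l /(Lset_iff r hA) [s [hs <-]]; apply: hM2.
by move=> l; apply: iff_trans (hL l); exact: Lset_iff.
Qed.

Theorem theorem3p3 (r : rat) (hr : 0 < r) (hat : atomic r) :
  (* (1) *)
  (r < 1 -> forall x, inSr r x -> Z_gt1 r x ->
     exists m, is_minL r x m /\
       forall l, Lset r x l <-> exists k, l = (m + k * (dq r - nq r))%N) /\
  (* (2) *)
  ((exists k : nat, r = k%:R) -> forall x, inSr r x ->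
     Z_eq1 r x /\ exists l0, forall l, Lset r x l <-> l = l0) /\
  (* (3) *)
  (1 < r -> ~ (exists k : nat, r = k%:R) -> forall x, inSr r x -> Z_gt1 r x ->
     exists m M, is_minL r x m /\ is_maxL r x M /\
       forall l, Lset r x l <->
         exists k : nat, (k%:R <= (M%:R - m%:R) / ((nq r)%:R - (dq r)%:R) :> rat)
                         /\ l = (m + k * (nq r - dq r))%N) /\
  (* in particular *)
  (forall x, inSr r x ->
     is_AP (Lset r x) (if (nq r <= dq r)%N then dq r - nq r else nq r - dq r)%N).
Proof.
have [hn hd hc hrd] := nd_facts r hr.
have P1 : r < 1 -> forall x, inSr r x -> Z_gt1 r x ->
     exists m, is_minL r x m /\
       forall l, Lset r x l <-> exists k, l = (m + k * (dq r - nq r))%N.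
  move=> hr1 x hx hz.
  have [hn2 hnd] := lt1_facts r hr hat hr1.
  have hA := atoms_char r hr hn2 (ltn_trans hn2 hnd).
  have [s1 [s2 [h1 [h2 hnp]]]] := Zgt1_lists r hA x hz.
  have hc' : coprime (dq r) (nq r) by rewrite coprime_sym.
  have [m [hm1 [hm2 hm3]]] := part1_core (nq r) (dq r) r hnd hd hc' hrd x s1 s2 h1 h2 hnp.
  exists m; split.
    split; first by apply/(Lset_iff r hA).
    by move=> l /(Lset_iff r hA) [s [hs <-]]; apply: hm2.
  by move=> l; apply: iff_trans (hm3 l); exact: Lset_iff.
have P2 : (exists k : nat, r = k%:R) -> forall x, inSr r x ->
     Z_eq1 r x /\ exists l0, forall l, Lset r x l <-> l = l0.
  by move=> [k hk] x hx; rewrite hk in hx *; exact: part2.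
split=> //; split=> //; split.
  move=> hr1 hnk x hx _.
  have [hdn [m [T [hm [hM hL]]]]] := gt1_core r hr hr1 hnk x hx.
  exists m, (m + T * (nq r - dq r))%N; split=> //; split=> //.
  have hnz : ((nq r - dq r)%N%:R : rat) != 0 by rewrite pnatr_eq0 -lt0n subn_gt0.
  have e : (((m + T * (nq r - dq r))%N%:R - m%:R) / ((nq r)%:R - (dq r)%:R) : rat) = T%:R.
    by rewrite natrD addrAC subrr add0r -natrB ?(ltnW hdn) // natrM mulfK.
  move=> l; rewrite hL e; split.
    by move=> [k [hk ->]]; exists k; rewrite ler_nat.
  by move=> [k [hk ->]]; exists k; rewrite -(ler_nat rat).
move=> x hx.
case: (classic (exists k : nat, r = k%:R)) => [hk|hnk].
  by have [_ [l0 hl0]] := P2 hk x hx; exact: ap_single hl0.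
case: (ltrgtP r 1) => hr1.
- have [hn2 hnd] := lt1_facts r hr hat hr1; rewrite (ltnW hnd).
  case: (classic (Z_gt1 r x)) => hz.
    by have [m [_ hm]] := P1 hr1 x hx hz; exists m; right.
  have [l0 hl0] := singleton_L r x hz (exists_fact r hat x hx).
  exact: ap_single hl0.
- have [hdn [m [T [_ [_ hL]]]]] := gt1_core r hr hr1 hnk x hx.
  rewrite leqNgt hdn /=; exists m; left; exists T; exact: hL.
- by exfalso; apply: hnk; exists 1%N; rewrite hr1.
Qed.
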